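(* Let $m>n$ be coprime positive integers, $\alpha=\epsilon_i-\delta_j$, $\lambda\in X_\alpha$, $\lambda^+=t_\alpha(\lambda)$, $\Lambda=x(\lambda)$ and $\Lambda^+=\tau_\alpha(\Lambda)$. If $(\Lambda^+,\beta)=0$ for $\beta=\epsilon_k-\delta_j$ with $k\in[n]$, then one of the following holds: (a) $k=i-1$, $\lambda_{n+1-i}=\lambda_{n+2-i}$ and $\beta=\epsilon_{i-1}-\delta_j$; (b) $\alpha=\epsilon_1-\delta_1$, $\beta=\epsilon_n-\delta_1$, $\lambda_1=m$, $\lambda_n=0$, and $(m,1^{n-1})\subseteq\lambda^+$ (i.e. $\lambda^+_1=m$ and $\lambda^+_n\ge1$).
   Context: $X$ is the set of partitions $\lambda=(\lambda_1\ge\dots\ge\lambda_n\ge0)$ with $\lambda_1\le m$, drawn in an $n\times m$ rectangle with rows $\epsilon_1,\dots,\epsilon_n$ top to bottom and columns $\delta_1,\dots,\delta_m$; the diagram consists of boxes $\epsilon_i-\delta_j$ with $j\le\lambda_{n+1-i}$; $\lambda'_j=\#\{i:\lambda_i\ge j\}$. $X_\alpha$: diagrams for which box $\alpha$ is an outer corner; $t_\alpha$ adds that box. $x(\lambda)=(a_1,\dots,a_n|b_1,\dots,b_m)$ with $a_i=m(n-i)+n\lambda_{n+1-i}$, $b_j=n(j-1)+m\lambda'_j$; $\tau_\alpha$ adds $n$ to $a_i$ and $m$ to $b_j$. For $\Lambda=(a|b)$ and $\gamma=\epsilon_p-\delta_q$, $(\Lambda,\gamma)=a_p-b_q$. *)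

(* Defs.v *)
From mathcomp Require Import all_boot all_order all_algebra.
Set Implicit Arguments. Unset Strict Implicit. Unset Printing Implicit Defensive.
Import GRing.Theory Num.Theory.

(* A partition lambda = (lambda_1 >= ... >= lambda_n >= 0) with lambda_1 <= m
   is represented by a function lam : nat -> nat; only lam 1, ..., lam n matter
   (1-based indexing as in the paper). *)
Definition is_part (n m : nat) (lam : nat -> nat) : Prop :=
  (forall p, 1 <= p < n -> lam p.+1 <= lam p) /\ (0 < n -> lam 1 <= m).

Definition conjp (n : nat) (lam : nat -> nat) (q : nat) : nat :=
  count (fun p => q <= lam p) (iota 1 n).

(* Box eps_i - delta_j lies in the diagram of lam iff q <= lambda_{n+1-i}. *)
Definition in_diag (n : nat) (lam : nat -> nat) (i j : nat) : Prop :=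
  1 <= i <= n /\ 1 <= j /\ j <= lam (n + 1 - i).

Definition t_alpha (n : nat) (i : nat) (lam : nat -> nat) : nat -> nat :=
  fun p => if p == n + 1 - i then (lam p).+1 else lam p.

(* X_alpha: lam is in X (partition in the n x m rectangle) and box
   alpha = eps_i - delta_j is an outer corner of its diagram, i.e. alpha is a box
   of the rectangle, not in the diagram, and adding it yields again a diagram
   of a partition in X (this forces j = lambda_{n+1-i} + 1). *)
Definition X_alpha (n m i j : nat) (lam : nat -> nat) : Prop :=
  is_part n m lam /\ 1 <= i <= n /\ 1 <= j <= m /\
  j = (lam (n + 1 - i)).+1 /\ is_part n m (t_alpha n i lam).

Definition weight := ((nat -> int) * (nat -> int))%type.

Local Open Scope ring_scope.
Definition x_of (n m : nat) (lam : nat -> nat) : weight :=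
  (fun p => ((m * (n - p) + n * lam (n + 1 - p))%N)%:Z,
   fun q => ((n * (q - 1) + m * conjp n lam q)%N)%:Z).

Definition tau_alpha (n m i j : nat) (L : weight) : weight :=
  (fun p => L.1 p + (if p == i then (n%:Z)%R else 0),
   fun q => L.2 q + (if q == j then m%:Z else 0)).

(* (Lambda, eps_p - delta_q) = a_p - b_q *)
Definition pairing (L : weight) (p q : nat) : int := L.1 p - L.2 q.

(* Main.v *)
Require Import Defs.
From mathcomp Require Import all_boot all_order all_algebra.
From mathcomp Require Import zify.
Import GRing.Theory Num.Theory.

Lemma mono_part n m lam : is_part n m lam ->
  forall q p, 1 <= p -> p <= q -> q <= n -> lam q <= lam p.
Proof.
move=> [Hp _]; elim=> [|q IH] p H1 H2 H3; first lia.
case: (ltnP p q.+1) => Hpq; last by have -> : p = q.+1 by lia.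
apply: leq_trans (Hp q _) (IH p _ _ _); lia.
Qed.

Lemma count_lem n m lam r : is_part n m lam -> 1 <= r <= n ->
  (1 < r -> lam r + 1 <= lam r.-1) ->
  count (fun p => lam r + 1 <= lam p) (iota 1 n) = r.-1.
Proof.
move=> Hp Hr Hc.
have E : n = r.-1 + (n - r.-1) by lia.
rewrite E iotaD count_cat.
rewrite (@eq_in_count _ _ predT); last first.
  move=> p; rewrite mem_iota => /andP [a b] /=.
  have := @mono_part n m lam Hp r.-1 p; have := Hc; lia.
rewrite count_predT size_iota.
rewrite (@eq_in_count _ _ pred0) ?count_pred0 ?addn0 //.
move=> p; rewrite mem_iota => /andP [a b] /=.
have := @mono_part n m lam Hp p r; lia.
Qed.

Theorem lemma4p8 (n m i j k : nat) (lam : nat -> nat) :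
  0 < n -> n < m -> coprime m n ->
  X_alpha n m i j lam ->
  1 <= k <= n ->
  pairing (tau_alpha n m i j (x_of n m lam)) k j = 0%R ->
  (k.+1 = i /\ lam (n + 1 - i) = lam (n + 2 - i))
  \/
  (i = 1 /\ j = 1 /\ k = n /\ lam 1 = m /\ lam n = 0 /\
   t_alpha n i lam 1 = m /\ 1 <= t_alpha n i lam n).
Proof.
move=> n0 nm cop [Hp [Hi [Hj [Hjr Ht]]]] Hk.
set r := n + 1 - i.
have Hr : 1 <= r <= n by rewrite /r; lia.
have Hc : conjp n lam j = r.-1.
  rewrite /conjp Hjr -addn1; rewrite (@count_lem n m lam r Hp Hr) // => r1.
  have [Htp _] := Ht.
  have := Htp r.-1; rewrite /t_alpha -/r.
  have -> : r.-1.+1 = r by lia.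
  rewrite eqxx ifF; last by apply/eqP; lia.
  rewrite addn1; apply; lia.
rewrite /pairing /tau_alpha /x_of /= eqxx Hc.
set A := lam (n + 1 - k).
set B := lam r.
set c := r.-1.
move=> E.
have {}E : (m * (n - k) + n * A + (k == i) * n = n * (j - 1) + m * c + m)%N.
  apply/eqP; rewrite -(eqz_nat) /=; apply/eqP.
  move/eqP: E; rewrite subr_eq0 => /eqP.
  case: (k == i); rewrite /= ?addr0 ?mul0n ?mul1n ?addn0 -!PoszD //.
have HjB : j - 1 = B by rewrite Hjr subn1.
rewrite HjB in E.
have copn : coprime n m by rewrite coprime_sym.
have Hcn : c = n - i by rewrite /c /r; lia.
case: (ltngtP k.+1 i) => Hki.
-
  exfalso.
  set d := i - k.+1.
  have Hd : m * (n - k) = m * c + m + m * d.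
    rewrite (_ : m * c + m + m * d = m * (c + 1 + d)); last by rewrite !mulnDr muln1.
    congr (_ * _); rewrite /d; lia.
  rewrite Hd in E.
  have Hdv : n %| m * d.
    have -> : m * d = n * B - n * A - (k == i) * n by lia.
    rewrite -mulnBr; case: (k == i); rewrite ?mul1n ?mul0n ?subn0 -?mulnBr.
      by rewrite -[X in _ - X]muln1 -mulnBr dvdn_mulr.
    by rewrite dvdn_mulr.
  rewrite Gauss_dvdr // in Hdv.
  have := dvdn_leq _ Hdv; rewrite /d; lia.
-
  set d := k.+1 - i.
  have Hd : m * c + m = m * (n - k) + m * d.
    rewrite (_ : m * (n - k) + m * d = m * (n - k + d)); last by rewrite mulnDr.
    rewrite (_ : m * c + m = m * (c + 1)); last by rewrite mulnDr muln1.
    congr (_ * _); rewrite /d; lia.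
  rewrite -[n * B + _ + _]addnA Hd in E.
  have Hdv : n %| m * d.
    have -> : m * d = n * A + (k == i) * n - n * B by lia.
    case: (k == i); rewrite ?mul1n ?mul0n ?addn0.
      by rewrite -[X in _ + X]muln1 -mulnDr -mulnBr dvdn_mulr.
    by rewrite -mulnBr dvdn_mulr.
  rewrite Gauss_dvdr // in Hdv.
  have := dvdn_leq _ Hdv; rewrite /d => Hle.
  have Hdn : d = n by rewrite /d; lia.
  have Hi1 : i = 1 by lia.
  have Hkn : k = n by lia.
  right.
  have n2 : 1 < n.
    case: (ltnP 1 n) => // n1; exfalso.
    have n1' : n = 1 by lia.
    rewrite Hdn in E; clear Hdn Hle Hdv Hd d; subst k i n.
    move: E; rewrite /A /B /c /r /=; lia.
  have Hki' : (k == i) = false by apply/eqP; lia.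
  rewrite Hki' mul0n addn0 in E.
  have HA : A = lam 1 by rewrite /A Hkn; congr lam; lia.
  have HB : B = lam n by rewrite /B /r Hi1; congr lam; lia.
  rewrite Hdn in E.
  have E2 : n * A = n * (B + m) by rewrite mulnDr [n * m]mulnC; lia.
  move/eqP: E2; rewrite eqn_pmul2l // => /eqP E2.
  have [_ Hl1] := Hp.
  have Hl1' := Hl1 n0.
  have L1 : lam 1 = m by lia.
  have Ln : lam n = 0 by lia.
  rewrite /t_alpha Hi1.
  have -> : n + 1 - 1 = n by lia.
  rewrite ifF; last by apply/eqP; lia.
  rewrite eqxx Ln; do !split => //; lia.
-
  left; split => //.
  have Hki' : (k == i) = false by apply/eqP; lia.
  rewrite Hki' mul0n addn0 in E.
  have : m * (n - k) = m * c + m.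
    by rewrite (_ : m * c + m = m * (c + 1)); [congr (_ * _); lia | rewrite mulnDr muln1].
  move=> H0.
  have : n * A = n * B by lia.
  move/eqP; rewrite eqn_pmul2l // => /eqP HAB.
  rewrite -/r -/B -HAB /A; congr lam; lia.
Qed.
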